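(* Let $k\ge2$ be an integer and $n\in\mathbb Z$. Then $L_k^{(n)}L_k^{(0)}=L_k^{(0)}L_k^{(n)}$.
   Context: Fix an integer $k\ge2$. Let $Q_k$ be the $k\times k$ matrix whose first row is all ones, with $(Q_k)_{i+1,i}=1$ for $1\le i\le k-1$ and all other entries $0$, and for $r\in\mathbb Z$ let $Q_k^r$ denote its $r$-th power. The generalized Lucas sequence of order $k$, $(l_{k,n})_{n\in\mathbb Z}$, is the two-sided sequence satisfying $l_{k,n+k}=l_{k,n+k-1}+\dots+l_{k,n}$ for all $n\in\mathbb Z$ with initial values $l_{k,r}=\operatorname{trace}(Q_k^r)$ for $0\le r\le k-1$ (so $l_{k,0}=k$ and $l_{k,r}=2^r-1$ for $1\le r\le k-1$). For $n\in\mathbb Z$ the generalized Lucas matrix $L_k^{(n)}$ is the $k\times k$ matrix with entries $(L_k^{(n)})_{i,1}=l_{k,k+n-i}$ and $(L_k^{(n)})_{i,j}=\sum_{m=n-i+j-1}^{k+n-i-1} l_{k,m}$ for $2\le j\le k$, $1\le i\le k$. *)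

(* Defs.v *)
From mathcomp Require Import all_boot all_order all_algebra.
Set Implicit Arguments. Unset Strict Implicit. Unset Printing Implicit Defensive.
Import GRing.Theory Num.Theory.
Local Open Scope ring_scope.

Definition Qmat (k : nat) : 'M[int]_k :=
  \matrix_(i < k, j < k) (if (i == 0%N :> nat) || (i == j.+1 :> nat) then 1 else 0).

Definition lucas_init (k : nat) : seq int := [seq \tr (Qmat k ^+ r) | r <- iota 0 k].

(* shift the window [l_n; ...; l_{n+k-1}] forward by one: append l_{n+k} = sum *)
Definition lucas_fwd (s : seq int) : seq int := rcons (behead s) (\sum_(x <- s) x).

(* shift backward by one: l_{n-1} = l_{n+k-1} - (l_n + ... + l_{n+k-2}) *)
Definition lucas_bwd (s : seq int) : seq int :=
  (last 0 s - \sum_(x <- belast 0 s) x) ::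
  take (size s).-1 s.
(* note: for s = a0::t, belast 0 s = 0 :: belast a0 t, whose sum is a0+...+a_{k-2} *)

Definition lucas (k : nat) (n : int) : int :=
  match n with
  | Posz m => head 0 (iter m lucas_fwd (lucas_init k))
  | Negz m => head 0 (iter m.+1 lucas_bwd (lucas_init k))
  end.

Definition lucas_mx (k : nat) (n : int) : 'M[int]_k :=
  \matrix_(i < k, j < k)
    (if j == 0%N :> nat then lucas k (n + k%:Z - i%:Z - 1)
     else \sum_(t < k - j) lucas k (n - i%:Z + j%:Z - 1 + t%:Z)).

(* Main.v *)
Require Import Defs.
From mathcomp Require Import all_boot all_order all_algebra zify.
Import GRing.Theory Num.Theory.
Local Open Scope ring_scope.

Lemma size_fwd (s : seq int) : s != [::] -> size (lucas_fwd s) = size s.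
Proof. by case: s => //= x t _; rewrite size_rcons. Qed.

Lemma size_bwd (s : seq int) : s != [::] -> size (lucas_bwd s) = size s.
Proof. by case: s => //= x t _; rewrite size_take /= ltnSn. Qed.

Lemma bwd_fwd (s : seq int) : s != [::] -> lucas_bwd (lucas_fwd s) = s.
Proof.
case: s => //= x t _; rewrite /lucas_bwd /lucas_fwd /= last_rcons belast_rcons.
rewrite size_rcons /= -cats1 take_size_cat // big_cons big_cons add0r.
by congr (_ :: _); rewrite addrK.
Qed.

Lemma fwd_bwd (s : seq int) : s != [::] -> lucas_fwd (lucas_bwd s) = s.
Proof.
case: s => //= x t _; rewrite /lucas_bwd /lucas_fwd /=.
have E : take (size t) (x :: t) = belast x t.
  by elim: t x => [|y t IH] x //=; rewrite IH.
rewrite E big_cons big_cons add0r subrK -lastI //.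
Qed.

Definition win k (n : int) : seq int :=
  match n with
  | Posz m => iter m lucas_fwd (lucas_init k)
  | Negz m => iter m.+1 lucas_bwd (lucas_init k)
  end.

Lemma lucas_winE k n : lucas k n = head 0 (win k n).
Proof. by case: n. Qed.

Lemma size_win k n : (0 < k)%N -> size (win k n) = k.
Proof.
move=> k0.
have si : size (lucas_init k) = k by rewrite size_map size_iota.
have ne : forall s : seq int, size s = k -> s != [::] by case=> [|? ?] // E; rewrite -E in k0.
case: n => m; rewrite /win.
  elim: m => [|m IH]; rewrite ?iterS ?size_fwd ?IH //; exact: ne.
elim: m => [|m IH]; first by rewrite iterS size_bwd ?si //; apply: ne.
rewrite iterS size_bwd ?IH //; exact: ne.
Qed.

Lemma win_succ k n : (0 < k)%N -> win k (n + 1) = lucas_fwd (win k n).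
Proof.
move=> k0.
have ne : forall m, win k m != [::] by move=> m; rewrite -size_eq0 size_win // -lt0n.
case: n => m.
  by rewrite -[1]/(Posz 1) -PoszD addn1.
case: m => [|m].
  have -> : Negz 0 + 1 = 0 by [].
  by rewrite fwd_bwd //; have := ne 0.
have -> : Negz m.+1 + 1 = Negz m by rewrite !NegzE; lia.
by rewrite [win k (Negz m.+1)]/= fwd_bwd //; have := ne (Negz m).
Qed.

Lemma lucas_win k n t : (0 < k)%N -> (t < k)%N -> lucas k (n + t%:Z) = nth 0 (win k n) t.
Proof.
move=> k0; elim: t n => [|t IH] n ht.
  by rewrite addr0 lucas_winE; case: (win k n).
have -> : n + t.+1%:Z = (n + 1) + t%:Z by lia.
rewrite IH ?(ltnW ht) // win_succ // /lucas_fwd.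
have ne : win k n != [::] by rewrite -size_eq0 size_win // -lt0n.
rewrite nth_rcons size_behead size_win //.
have -> : (t < k.-1)%N by lia.
by rewrite nth_behead.
Qed.

Lemma lucas_rec k (hk : (0 < k)%N) (m : int) :
  lucas k (m + k%:Z) = \sum_(s < k) lucas k (m + s%:Z).
Proof.
have -> : m + k%:Z = (m + 1) + (k.-1)%:Z by lia.
rewrite lucas_win ?prednK // ?ltn_predL // win_succ // /lucas_fwd.
rewrite nth_rcons size_behead size_win // ltnn eqxx.
rewrite (big_nth 0) size_win // big_mkord; apply: eq_bigr => i _.
by rewrite lucas_win.
Qed.

Definition Amx (k : nat) (a : int -> int) (n : int) : 'M[int]_k :=
  \matrix_(i < k, j < k)
    (if j == 0%N :> nat then a (n + k%:Z - i%:Z - 1)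
     else \sum_(t < k - j) a (n - i%:Z + j%:Z - 1 + t%:Z)).

Lemma QmatE k (i j : 'I_k) : Qmat k i j = if (i == 0%N :> nat) || (i == j.+1 :> nat) then 1 else 0.
Proof. by rewrite mxE. Qed.

Section S.
Variable (k : nat) (a : int -> int).
Hypothesis rec : forall m, a (m + k%:Z) = \sum_(s < k) a (m + s%:Z).

Lemma revsum (m : int) : \sum_(l < k) a (m - l%:Z) = a (m + 1).
Proof.
rewrite (reindex_inj rev_ord_inj) /=.
have -> : m + 1 = (m + 1 - k%:Z) + k%:Z by lia.
rewrite rec; apply: eq_bigr => l _; congr a; have := ltn_ord l; lia.
Qed.

Lemma QA n : Qmat k *m Amx k a n = Amx k a (n + 1).
Proof.
apply/matrixP => i j; rewrite !mxE.
case: i => [[|i] Hi] /=.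
  under eq_bigr => l _ do rewrite /Qmat !mxE /= mul1r.
  case: eqP => [_|_].
    rewrite -(_ : n + k%:Z - 1 + 1 = n + 1 + k%:Z - 0%Z - 1); last by lia.
    rewrite -revsum; apply: eq_bigr => l _; congr a; lia.
  rewrite exchange_big; apply: eq_bigr => t _.
  rewrite -(_ : (n + j%:Z - 1 + t%:Z) + 1 = n + 1 - 0%Z + j%:Z - 1 + t%:Z); last by lia.
  rewrite -revsum; apply: eq_bigr => l _; congr a; lia.
have Hi' : (i < k)%N by apply: ltnW.
rewrite (bigD1 (Ordinal Hi')) //= big1 => [|l /negbTE Hl].
  rewrite /Qmat !mxE /= eqxx /= mul1r addr0.
  case: eqP => _; first by congr a; lia.
  by apply: eq_bigr => t _; congr a; lia.
rewrite /Qmat mxE /= eqSS.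
have -> : (i == l :> nat) = false by apply/negbTE; apply: contraFneq Hl => E; apply/eqP/val_inj.
by rewrite mul0r.
Qed.

Lemma AQ (hk : (2 <= k)%N) n : Amx k a n *m Qmat k = Amx k a (n + 1).
Proof.
have k0 : (0 < k)%N by apply: leq_trans hk.
apply/matrixP => i j; rewrite !mxE.
rewrite (bigD1 (Ordinal k0)) //=.
rewrite {1}/Qmat !mxE /= mulr1.
have recl (m : int) : a (m + k%:Z) = \sum_(s < k.-1) a (m + s%:Z) + a (m + k%:Z - 1).
  rewrite rec -!(big_mkord xpredT (fun s => a (m + s%:Z))) -{1}(prednK k0) big_nat_recr //=.
  congr (_ + a _); lia.
case: (ltnP j.+1 k) => Hj.
  rewrite (bigD1 (Ordinal Hj)) //= big1 => [|l /andP[l0 Hl]].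
    rewrite /Qmat !mxE /= eqxx ?orbT mulr1 addr0.
    case: eqP => [j0|jn0].
      rewrite j0 /=.
      have -> : n + 1 + k%:Z - i%:Z - 1 = (n - i%:Z) + k%:Z by lia.
      rewrite recl addrC; congr (_ + _); last by congr a; lia.
      by rewrite subn1; apply: eq_bigr => t _; congr a; lia.
    have -> : (k - j = (k - j.+1).+1)%N by lia.
    rewrite big_ord_recr /= addrC; congr (_ + _); last by congr a; lia.
    by apply: eq_bigr => t _; congr a; lia.
  rewrite QmatE.
  have -> : (l == 0%N :> nat) = false by apply/negbTE; apply: contraNneq l0 => E; apply/eqP/val_inj.
  have -> : (l == j.+1 :> nat) = false by apply/negbTE; apply: contraNneq Hl => E; apply/eqP/val_inj.
  by rewrite mulr0.
rewrite big1 => [|l /negbTE l0].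
  have jk : (j = k.-1 :> nat) by have := ltn_ord j; lia.
  have -> : (j == 0%N :> nat) = false by apply/eqP; lia.
  rewrite addr0 (_ : (k - j = 1)%N); last by lia.
  by rewrite big_ord1; congr a => /=; lia.
rewrite QmatE.
have -> : (l == 0%N :> nat) = false by apply/negbTE; apply: contraFneq l0 => E; apply/eqP/val_inj.
have -> : (l == j.+1 :> nat) = false by apply/negbTE/eqP => E; have := ltn_ord l; lia.
by rewrite mulr0.
Qed.
End S.

Theorem corollary1 (k : nat) (hk : (2 <= k)%N) (n : int) :
  lucas_mx k n *m lucas_mx k 0 = lucas_mx k 0 *m lucas_mx k n.
Proof.
have rec := @lucas_rec k (leq_trans (isT : (0 < 2)%N) hk).
have E m : lucas_mx k m = Amx k (lucas k) m by [].
rewrite !E; clear E.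
move: rec hk; set a := lucas k => rec.
case: k a rec => [|[|k]] // a rec hk.
set Q := Qmat k.+2.
have QA' m : Q * Amx k.+2 a m = Amx k.+2 a (m + 1) by rewrite -mulmxE QA.
have AQ' m : Amx k.+2 a m * Q = Amx k.+2 a (m + 1) by rewrite -mulmxE AQ.
have P (p : nat) m : Amx k.+2 a (m + p%:Z) = Q ^+ p * Amx k.+2 a m.
  elim: p => [|p IH]; first by rewrite addr0 expr0 mul1r.
  by rewrite -[p.+1]addn1 PoszD addrA -QA' IH addn1 exprS mulrA.
have C (p : nat) m : Q ^+ p * Amx k.+2 a m = Amx k.+2 a m * Q ^+ p.
  apply/esym/commrX; rewrite /GRing.comm QA' AQ' //.
rewrite !mulmxE.
case: n => p.
  rewrite -[Posz p]add0r P.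
  by rewrite mulrA C.
have -> : (0 : int) = Negz p + p.+1%:Z by rewrite NegzE; lia.
rewrite P.
by rewrite mulrA C.
Qed.
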